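(* Let $T$ be a finite tree and let $P=p_0p_1\dots p_k$ ($k\ge1$) be a path in $T$ such that each of $p_1,\dots,p_{k-1}$ has degree $2$ in $T$. Let $B$ be the vertex set of the component containing $p_k$ of the graph obtained from $T$ by deleting the edges of $P$, and let $T[B\cup P]$ denote the subgraph of $T$ induced by $B\cup\{p_0,\dots,p_k\}$. If $k$ is even, then for every $\ell\ge1$, \[\omega_{\ell}(p_0,T[B\cup P])-\omega_{\ell}(p_0,P)\leq \omega_{\ell}(p_k,T[B\cup P])-\omega_{\ell}(p_k,P).\]
   Context: For a graph $G$, a vertex $x$ of $G$ and $\ell\ge1$, $\omega_\ell(x,G)$ denotes the number of walks of length $\ell$ in $G$ starting at $x$ (a walk of length $\ell$ being a sequence of vertices $x=v_0,v_1,\dots,v_\ell$ with $v_{i-1}v_i\in E(G)$). Here $P$ is regarded as a graph (the path). *)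

(* Defs.v *)
(* finite simple graphs as symmetric irreflexive relations on a finType. *)
From mathcomp Require Import all_boot all_order all_algebra.
Set Implicit Arguments. Unset Strict Implicit. Unset Printing Implicit Defensive.

Definition is_tree (V : finType) (e : rel V) : Prop :=
  symmetric e /\ irreflexive e /\ (forall x y : V, connect e x y) /\
  (forall c : seq V, uniq c -> 3 <= size c -> ~~ cycle e c).

(* Number of walks of length l starting at x in the graph with vertex set S and
   adjacency adj (edges used are adj-edges between vertices of S):
   sequences x = v_0, v_1, ..., v_l of vertices of S with adj v_(i-1) v_i. *)
Definition nwalks (V : finType) (S : {set V}) (adj : rel V) (l : nat) (x : V) : nat :=
  #|[set t : l.-tuple V | [&& x \in S, all (fun v => v \in S) t & path adj x t]]|.

Definition path_vset (V : finType) (p : nat -> V) (k : nat) : {set V} :=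
  [set x | [exists i : 'I_k.+1, x == p i]].

Definition path_adj (V : finType) (p : nat -> V) (k : nat) : rel V :=
  fun x y => [exists i : 'I_k, ((x == p i) && (y == p i.+1)) || ((y == p i) && (x == p i.+1))].

Definition del_path_edges (V : finType) (e : rel V) (p : nat -> V) (k : nat) : rel V :=
  fun x y => e x y && ~~ path_adj p k x y.

Definition compB (V : finType) (e : rel V) (p : nat -> V) (k : nat) : {set V} :=
  [set y | connect (del_path_edges e p k) (p k) y].

(* Main.v *)
Require Import Defs.
From mathcomp Require Import all_boot all_order all_algebra.
From mathcomp Require Import zify.
Import Order.TTheory GRing.Theory Num.Theory.

Set Implicit Arguments.
Record hyp (V : finType) (e : rel V) (p : nat -> V) (k : nat) : Prop := Hyp {
 hsym : symmetric e; hirr : irreflexive e;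
 hacyc : forall c : seq V, uniq c -> 3 <= size c -> ~~ cycle e c;
 hinj : forall i j, i <= k -> j <= k -> p i = p j -> i = j;
 hedge : forall i, i < k -> e (p i) (p i.+1);
 hdeg : forall i, 0 < i -> i < k -> #|[set y | e (p i) y]| = 2;
 hk : 2 <= k }.

Lemma padjP (V : finType) (p : nat -> V) k x y :
  reflect (exists2 i, i < k & (x = p i /\ y = p i.+1) \/ (y = p i /\ x = p i.+1))
    (path_adj p k x y).
Proof.
apply: (iffP existsP).
  by case=> i /orP[/andP[/eqP-> /eqP->]|/andP[/eqP-> /eqP->]]; exists i => //; [left|right].
case=> i ik [[-> ->]|[-> ->]]; exists (Ordinal ik); by rewrite !eqxx ?orbT.
Qed.

Lemma padj_fw (V : finType) (p : nat -> V) k i : i < k -> path_adj p k (p i) (p i.+1).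
Proof. by move=> ik; apply/padjP; exists i => //; left. Qed.
Lemma padj_bw (V : finType) (p : nat -> V) k i : i < k -> path_adj p k (p i.+1) (p i).
Proof. by move=> ik; apply/padjP; exists i => //; right. Qed.
Lemma padj_sym (V : finType) (p : nat -> V) k : symmetric (path_adj p k).
Proof.
move=> x y; apply/padjP/padjP; case=> i ik H; exists i => //; tauto.
Qed.

Lemma padj_e V e p k : @hyp V e p k -> forall x y, path_adj p k x y -> e x y.
Proof.
move=> h x y /padjP[i ik [[-> ->]|[-> ->]]]; first exact: hedge h _ ik.
by rewrite (hsym h); exact: hedge h _ ik.
Qed.

Lemma vsetP (V : finType) (p : nat -> V) k x :
  reflect (exists2 j, j <= k & x = p j) (x \in path_vset p k).
Proof.
rewrite inE; apply: (iffP existsP).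
  by case=> i /eqP->; exists i => //; rewrite -ltnS.
by case=> j jk ->; exists (Ordinal (jk : j < k.+1)).
Qed.

Lemma inP (V : finType) (p : nat -> V) k j : j <= k -> p j \in path_vset p k.
Proof. by move=> jk; apply/vsetP; exists j. Qed.

Lemma padj_vset (V : finType) (p : nat -> V) k x y : path_adj p k x y ->
  (x \in path_vset p k) && (y \in path_vset p k).
Proof.
by case/padjP=> i ik [[-> ->]|[-> ->]]; rewrite !inP // ltnW.
Qed.

Lemma path_iota V e p k : @hyp V e p k -> forall n a, a + n <= k ->
  path e (p a) (map p (iota a.+1 n)).
Proof.
move=> h; elim=> [|n IH] a an //=.
apply/andP; split.
  by apply: (hedge h); move: an; rewrite addnS; apply: leq_trans; rewrite ltnS leq_addr.
by apply: IH; rewrite addSnnS.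
Qed.

Lemma uniq_iota V e p k : @hyp V e p k -> forall a n, a + n <= k.+1 ->
  uniq (map p (iota a n)).
Proof.
move=> h a n an; rewrite map_inj_in_uniq ?iota_uniq //.
move=> i j; rewrite !mem_iota => /andP[_ ia] /andP[_ ja]; apply: (hinj h).
  by rewrite -ltnS (leq_trans ia).
by rewrite -ltnS (leq_trans ja).
Qed.

Lemma nbr V e p k : @hyp V e p k -> forall i y, 0 < i -> i < k -> e (p i) y ->
  y = p i.-1 \/ y = p i.+1.
Proof.
move=> h i y i0 ik ey.
have ne : p i.-1 != p i.+1.
  apply/eqP => H; have := hinj h _ _ (leq_trans (leq_pred i) (ltnW ik)) ik H.
  move=> E; have : i.-1 < i.+1 by rewrite ltnS leq_pred.
  by rewrite E ltnn.
have sub : [set p i.-1; p i.+1] \subset [set y | e (p i) y].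
  apply/subsetP => z; rewrite !inE => /orP[]/eqP->.
    rewrite (hsym h); have := hedge h _ (leq_ltn_trans (leq_pred i) ik).
    by rewrite prednK.
  exact: hedge h _ ik.
have E : [set p i.-1; p i.+1] == [set y | e (p i) y].
  by rewrite eqEcard sub cards2 ne (hdeg h _ i0 ik).
have : y \in [set y | e (p i) y] by rewrite inE.
by rewrite -(eqP E) !inE => /orP[]/eqP->; [left|right].
Qed.

Arguments padj_fw {V p k i}. Arguments padj_bw {V p k i}.
Arguments padjP {V p k x y}. Arguments padj_vset {V p k x y}.
Arguments inP {V p k j}. Arguments vsetP {V p k x}.

Lemma del_mid V e p k : @hyp V e p k -> forall i y, 0 < i -> i < k ->
  del_path_edges e p k y (p i) = false.
Proof.
move=> h i y i0 ik; rewrite /del_path_edges.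
case Ey: (e y (p i)) => //=; apply/negbF.
rewrite (hsym h) in Ey; rewrite padj_sym.
case: (nbr h _ _ i0 ik Ey) => ->; last exact: padj_fw.
by have := padj_bw (leq_ltn_trans (leq_pred i) ik); rewrite prednK.
Qed.

Lemma cyc_path V e p k : @hyp V e p k -> forall j, 2 <= j -> j <= k -> ~~ e (p 0) (p j).
Proof.
move=> h j j2 jk; apply/negP => E.
have U : uniq (map p (iota 0 j.+1)) by apply: (uniq_iota h); rewrite add0n ltnS.
have S3 : 3 <= size (map p (iota 0 j.+1)) by rewrite size_map size_iota ltnS.
have := hacyc h _ U S3.
have Pi : path e (p 0) (map p (iota 1 j)) by apply: (path_iota h); rewrite add0n.
case/negP => /=; rewrite -cats1 cat_path Pi /=.
have -> : last (p 0) [seq p i | i <- iota 1 j] = p j.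
  case: j {j2 jk E U S3 Pi} => // j; by rewrite -[j.+1]addn1 iotaD map_cat last_cat /= addnC.
by rewrite andbT (hsym h) E.
Qed.

Lemma F2 V e p k : @hyp V e p k -> forall v, e (p 0) v ->
  v \in compB e p k :|: path_vset p k -> v = p 1.
Proof.
move=> h v E; have k2 := hk h; case Pv: (v \in path_vset p k).
  case/vsetP: Pv E => [[|[|j]]] jk -> E //.
    by rewrite (hirr h) in E.
  by rewrite (negbTE (cyc_path h j.+2 isT jk)) in E.
rewrite inE Pv orbF inE => C; exfalso.
have C0 : connect (del_path_edges e p k) (p k) (p 0).
  apply: connect_trans C (connect1 _); rewrite /del_path_edges (hsym h) E /=.
  by apply/negP => /padj_vset /andP[Pv' _]; rewrite Pv' in Pv.
case/connectP: C0 => q pq; case: (shortenP pq) => q' pq' uq' _ lq' {q pq}.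
have notin : forall i, 0 < i -> i < k -> p i \notin p k :: q'.
  move=> i i0 ik; rewrite inE negb_or; apply/andP; split.
    by apply/eqP => /(hinj h _ _ (ltnW ik) (leqnn k)) E'; rewrite E' ltnn in ik.
  apply/negP => Hin; move: pq'; case/splitPr: Hin => q1 q2.
  rewrite cat_path /= => /andP[_ /andP[]].
  by rewrite (del_mid h _ _ i0 ik).
have q'n : q' != [::].
  apply/eqP => q0; move: lq'; rewrite q0 /= => /(hinj h _ _ (leq0n _) (leqnn k)) k0.
  by rewrite -k0 in k2.
apply: (negP (hacyc h (p k :: q' ++ map p (iota 1 k.-1)) _ _)).
- have k0 : 0 < k := ltnW k2.
  have Ui : uniq (map p (iota 1 k.-1)).
    by apply: (uniq_iota h); rewrite add1n (prednK k0) leqnSn.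
  rewrite -cat_cons cat_uniq uq' Ui andbT; apply/hasPn => x /mapP[i Hi ->].
  move: Hi; rewrite mem_iota add1n (prednK k0) => /andP[i0 ik].
  exact: notin.
- rewrite /= size_cat size_map size_iota.
  have sq : 0 < size q' by move: q'n; case: (q').
  rewrite -subn1; move: (size q') (k) sq k2 => a b; lia.
- rewrite /= rcons_cat cat_path; apply/andP; split.
    by apply: sub_path pq' => x y /andP[].
  rewrite -lq' -map_rcons.
  have -> : rcons (iota 1 k.-1) k = iota 1 k.
    have k0 : 0 < k := ltnW k2.
    rewrite -cats1; have -> : iota 1 k = iota 1 (k.-1 + 1) by rewrite addn1 (prednK k0).
    by rewrite iotaD add1n (prednK k0).
  by apply: (path_iota h).
Qed.

Definition refl (V : finType) (p : nat -> V) k (v : V) : V :=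
  if [pick i : 'I_k.+1 | v == p i] is Some i then p (k - i) else v.
Arguments refl {V}.

Lemma refl_p V e p k : @hyp V e p k -> forall j, j <= k -> refl p k (p j) = p (k - j).
Proof.
move=> h j jk; rewrite /refl; case: pickP => [i /eqP E | H].
  by rewrite (hinj h _ _ jk _ E) // -ltnS.
by have := H (Ordinal (jk : j < k.+1)); rewrite eqxx.
Qed.

Lemma refl_out (V : finType) (p : nat -> V) k v : v \notin path_vset p k -> refl p k v = v.
Proof.
move=> nv; rewrite /refl; case: pickP => [i /eqP E | //].
by move: nv; rewrite E inP // -ltnS.
Qed.

Lemma refl_inv V e p k : @hyp V e p k -> forall v, refl p k (refl p k v) = v.
Proof.
move=> h v; case Pv: (v \in path_vset p k); last by rewrite !refl_out ?Pv.
case/vsetP: Pv => j jk ->; rewrite !(refl_p h) ?leq_subr //.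
by rewrite subKn.
Qed.

Lemma refl_vset V e p k : @hyp V e p k -> forall v, v \in path_vset p k ->
  refl p k v \in path_vset p k.
Proof.
by move=> h v /vsetP[j jk ->]; rewrite (refl_p h) // inP // leq_subr.
Qed.

Lemma refl_m V e p k m : @hyp V e p k -> k = m.*2 -> forall v,
  (refl p k v == p m) = (v == p m).
Proof.
move=> h km v; have mk : m <= k by rewrite km -addnn leq_addr.
case Pv: (v \in path_vset p k); last by rewrite !refl_out ?Pv.
case/vsetP: Pv => j jk ->; rewrite (refl_p h) //.
apply/eqP/eqP => /(hinj h _ _ _ mk) E.
  have E' := E (leq_subr _ _); rewrite -E'; congr p; move: E' jk; rewrite km; lia.
by rewrite -E // km; congr p; move: E; rewrite km; lia.
Qed.

Lemma refl_padj V e p k : @hyp V e p k -> forall x y, path_adj p k x y ->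
  path_adj p k (refl p k x) (refl p k y).
Proof.
move=> h x y /padjP[i ik [[-> ->]|[-> ->]]];
  rewrite !(refl_p h) ?(ltnW ik) // -(subnSK ik).
  by apply: padj_bw; move: ik; lia.
by apply: padj_fw; move: ik; lia.
Qed.

Lemma path_map_hom (T : Type) (r : rel T) (f : T -> T) :
  (forall x y, r x y -> r (f x) (f y)) -> forall x s, path r x s -> path r (f x) (map f s).
Proof.
move=> H x s; elim: s x => //= y s IH x /andP[rxy ps]; by rewrite H // IH.
Qed.

Lemma splitfirst (T : eqType) (x : T) t : x \in t ->
  exists pre, exists rest, t = pre ++ x :: rest /\ x \notin pre.
Proof.
elim: t => // y t IH; rewrite inE; case: eqP => [-> _ | ne /IH [pre [rest [-> nx]]]].
  by exists [::], t.
exists (y :: pre), rest; split => //; rewrite inE negb_or nx andbT.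
by apply/eqP => E; apply: ne.
Qed.

Definition hh (T : eqType) (f : T -> T) (x : T) (t : seq T) :=
  map f (take (index x t) t) ++ drop (index x t) t.
Arguments hh {T}.

Lemma hh_cat (T : eqType) (f : T -> T) x pre rest : x \notin pre ->
  hh f x (pre ++ x :: rest) = map f pre ++ x :: rest.
Proof.
move=> nx; rewrite /hh index_cat (negbTE nx) /= eqxx addn0.
by rewrite take_size_cat // drop_size_cat.
Qed.

Lemma size_hh (T : eqType) (f : T -> T) x t : size (hh f x t) = size t.
Proof.
by rewrite /hh size_cat size_map size_takel ?index_size // size_drop subnKC // index_size.
Qed.

Lemma step V e p k m : @hyp V e p k -> k = m.*2 -> forall j y, j < m -> e (p j) y ->
  y \in compB e p k :|: path_vset p k ->
  exists2 j', j' <= j.+1 & (y = p j' /\ path_adj p k (p j) y).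
Proof.
move=> h km j y jm E Sy.
have jk : j < k by rewrite km -addnn (leq_trans jm) // leq_addr.
case: j jm E jk => [|j] jm E jk.
  by rewrite (F2 h E Sy); exists 1 => //; split => //; exact: padj_fw.
case: (nbr h j.+1 y isT jk E) => ->.
  by exists j; [exact: leqW (leqW (leqnn j)) | split => //; exact: padj_bw (ltnW jk)].
by exists j.+2; [exact: leqnn | split => //; exact: padj_fw jk].
Qed.

Lemma walkK V e p k m : @hyp V e p k -> k = m.*2 -> forall w j, j < m ->
  p m \notin w -> path e (p j) w ->
  all (fun v => v \in compB e p k :|: path_vset p k) w ->
  path (path_adj p k) (p j) w && all (fun v => v \in path_vset p k) w.
Proof.
move=> h km; have mk : m <= k by rewrite km -addnn leq_addr.
elim=> [|y w IH] j jm //=.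
rewrite inE negb_or => /andP[ym nm] /andP[E pw] /andP[Sy aw].
case: (@step _ _ _ _ m h km _ _ jm E Sy) => j' j'j [yj pa].
rewrite pa /=; move: ym pw aw; rewrite yj => ym pw aw.
have j'm : j' < m.
  rewrite ltn_neqAle (leq_trans j'j jm) andbT.
  by apply: contraNneq ym => ->.
rewrite inP ?(leq_trans (ltnW j'm) mk) //=.
by case/andP: (IH j' j'm nm pw aw) => -> ->.
Qed.

Lemma walkK' V e p k m : @hyp V e p k -> k = m.*2 -> forall pre j, j < m ->
  p m \notin pre -> path e (p j) (rcons pre (p m)) ->
  all (fun v => v \in compB e p k :|: path_vset p k) pre ->
  path (path_adj p k) (p j) (rcons pre (p m)) && all (fun v => v \in path_vset p k) pre.
Proof.
move=> h km; have mk : m <= k by rewrite km -addnn leq_addr.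
elim=> [|y w IH] j jm /=.
  move=> _ /andP[E _] _.
  have Sm : p m \in compB e p k :|: path_vset p k by rewrite inE inP ?orbT.
  by case: (@step _ _ _ _ m h km _ _ jm E Sm) => j' _ [_ ->].
rewrite inE negb_or => /andP[ym nm] /andP[E pw] /andP[Sy aw].
case: (@step _ _ _ _ m h km _ _ jm E Sy) => j' j'j [yj pa].
rewrite pa /=; move: ym pw aw; rewrite yj => ym pw aw.
have j'm : j' < m.
  rewrite ltn_neqAle (leq_trans j'j jm) andbT.
  by apply: contraNneq ym => ->.
rewrite inP ?(leq_trans (ltnW j'm) mk) //=.
by case/andP: (IH j' j'm nm pw aw) => -> ->.
Qed.

Lemma mainwalk V e p k m : @hyp V e p k -> k = m.*2 -> forall t,
  all (fun v => v \in compB e p k :|: path_vset p k) t -> path e (p 0) t ->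
  ~~ [&& p 0 \in path_vset p k, all (fun v => v \in path_vset p k) t
       & path (path_adj p k) (p 0) t] ->
  [/\ all (fun v => v \in compB e p k :|: path_vset p k) (hh (refl p k) (p m) t),
      path e (p k) (hh (refl p k) (p m) t),
      ~~ [&& p k \in path_vset p k,
             all (fun v => v \in path_vset p k) (hh (refl p k) (p m) t)
           & path (path_adj p k) (p k) (hh (refl p k) (p m) t)] &
      hh (refl p k) (p m) (hh (refl p k) (p m) t) = t].
Proof.
move=> h km t aG pG nP.
have k2 := hk h.
have mk : m <= k by rewrite km -addnn leq_addr.
have m0 : 0 < m by move: k2; rewrite km; case: (m).
have kmm : k - m = m by rewrite km -addnn addnK.
have mt : p m \in t.
  apply: contraNT nP => nm.
  case/andP: (@walkK _ _ _ _ m h km t 0 m0 nm pG aG) => -> ->.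
  by rewrite inP.
case: (@splitfirst _ _ _ mt) => pre [rest [ht npre]]; subst t.
have /andP[pP aP] : path (path_adj p k) (p 0) (rcons pre (p m)) &&
     all (fun v => v \in path_vset p k) pre.
  apply: (@walkK' _ _ _ _ m h km pre 0 m0 npre).
    by move: pG; rewrite -cat_rcons cat_path => /andP[].
  by move: aG; rewrite all_cat => /andP[].
have pr : path e (p m) rest.
  by move: pG; rewrite -cat_rcons cat_path last_rcons => /andP[].
have ar : all (fun v => v \in compB e p k :|: path_vset p k) (p m :: rest).
  by move: aG; rewrite all_cat => /andP[].
have npre' : p m \notin map (refl p k) pre.
  apply/mapP => [[x xin E]]; have : refl p k x == p m by rewrite -E.
  by rewrite (@refl_m _ _ _ _ m h km) => /eqP xm; rewrite -xm xin in npre.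
have -> : hh (refl p k) (p m) (pre ++ p m :: rest) = map (refl p k) pre ++ p m :: rest.
  exact: hh_cat.
split.
- rewrite all_cat ar andbT; apply/allP => x /mapP[y yin ->].
  rewrite inE (refl_vset h) ?orbT //.
  exact: (allP aP).
- rewrite -cat_rcons cat_path last_rcons pr andbT.
  apply: (sub_path (padj_e h)).
  have := @path_map_hom _ _ _ (refl_padj h) _ _ pP.
  by rewrite map_rcons !(refl_p h) // subn0 kmm.
- apply/negP => /and3P[_ aP' pP']; move/negP: nP; apply.
  rewrite inP // all_cat aP /=.
  move: aP'; rewrite all_cat /= => /andP[_ /andP[-> ->]] /=.
  rewrite -cat_rcons cat_path last_rcons pP /=.
  by move: pP'; rewrite -cat_rcons cat_path last_rcons => /andP[_ ->].
- have -> : hh (refl p k) (p m) (map (refl p k) pre ++ p m :: rest) =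
     map (refl p k) (map (refl p k) pre) ++ p m :: rest.
    exact: hh_cat.
  by rewrite (mapK (refl_inv h)).
Qed.

Lemma card_diff (T : finType) (A B : {set T}) : B \subset A ->
  (#|A|%:Z - #|B|%:Z = #|A :\: B|%:Z)%R.
Proof.
by move=> H; rewrite cardsD (setIidPr H) -subzn // subset_leq_card.
Qed.

Lemma Wsub V e p k : @hyp V e p k -> forall x (t : seq V),
  [&& x \in path_vset p k, all (fun v => v \in path_vset p k) t & path (path_adj p k) x t] ->
  [&& x \in compB e p k :|: path_vset p k,
      all (fun v => v \in compB e p k :|: path_vset p k) t & path e x t].
Proof.
move=> h x t /and3P[xs ats pt]; rewrite inE xs orbT /=.
rewrite (sub_path (padj_e h) pt) andbT.
by apply: sub_all ats => v vs; rewrite inE vs orbT.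
Qed.

Unset Implicit Arguments.

Theorem lemma1 (V : finType) (e : rel V) (p : nat -> V) (k : nat) :
  is_tree e ->
  1 <= k ->
  (forall i j, i <= k -> j <= k -> p i = p j -> i = j) ->
  (forall i, i < k -> e (p i) (p i.+1)) ->
  (forall i, 0 < i -> i < k -> #|[set y | e (p i) y]| = 2) ->
  ~~ odd k ->
  forall l : nat, 1 <= l ->
  ((nwalks (compB e p k :|: path_vset p k) e l (p 0%N))%:Z
     - (nwalks (path_vset p k) (path_adj p k) l (p 0%N))%:Z
   <= (nwalks (compB e p k :|: path_vset p k) e l (p k))%:Z
     - (nwalks (path_vset p k) (path_adj p k) l (p k))%:Z)%R.
Proof.
move=> [sy [ir [_ ac]]] k1 inj ed dg ev l _.
have h : hyp V e p k.
  by constructor => //; move: k1 ev; case: (k) => [|[|]].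
set m := k./2.
have km : k = m.*2 by rewrite -[k in LHS]odd_double_half (negbTE ev) add0n.
rewrite /nwalks !card_diff; try by apply/subsetP => t; rewrite [t \in _]in_set => /(Wsub h); rewrite [t \in _]in_set.
rewrite lez_nat.
set D0 := (X in #|X| <= _); set Dk := (X in _ <= #|X|).
pose f := fun t : l.-tuple V => insubd t (hh (refl p k) (p m) t).
have fE : forall t, tval (f t) = hh (refl p k) (p m) t.
  by move=> t; have := val_insubd t (hh (refl p k) (p m) t); rewrite size_hh size_tuple eqxx.
have memD0 : forall t, t \in D0 ->
    [/\ all (fun v => v \in compB e p k :|: path_vset p k) (hh (refl p k) (p m) t),
      path e (p k) (hh (refl p k) (p m) t),
      ~~ [&& p k \in path_vset p k,
             all (fun v => v \in path_vset p k) (hh (refl p k) (p m) t)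
           & path (path_adj p k) (p k) (hh (refl p k) (p m) t)] &
      hh (refl p k) (p m) (hh (refl p k) (p m) t) = t].
  move=> t; rewrite [t \in _]in_setD [t \in _]in_set [t \in _]in_set.
  move=> /andP[nP /and3P[_ aG pG]].
  exact: (@mainwalk _ _ _ _ m h km t aG pG nP).
rewrite -(@card_in_imset _ _ f D0).
  apply: subset_leq_card; apply/subsetP => _ /imsetP[t Ht ->].
  case: (memD0 t Ht) => aG pG nP _.
  rewrite [_ \in _ :\: _]in_setD [f t \in _]in_set [f t \in _]in_set fE nP aG pG.
  by rewrite inE inP ?orbT.
move=> t1 t2 H1 H2 E; apply: val_inj; rewrite /=.
case: (memD0 t1 H1) => _ _ _ <-; case: (memD0 t2 H2) => _ _ _ <-.
by rewrite -!fE E.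
Qed.
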